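(* Reduction Rule 3 is safe: if \((G',k')\) is obtained from an instance \((G,k)\) of Vertex Cover by applying Reduction Rule 3, then \(k'+MM(G')-2LP(G')\leq k+MM(G)-2LP(G)\).
   Context: All graphs are finite, undirected and simple. An instance of Vertex Cover is a pair \((G,k)\), \(k\in\mathbb{N}\). \(MM(G)\) is the size of a maximum matching. \(LPVC(G)\) is the LP: minimize \(\sum_v x_v\) subject to \(x_u+x_v\ge1\) for each edge \(\{u,v\}\) and \(0\le x_v\le1\); \(LP(G)\) is its optimum value. For \(X\subseteq V(G)\), \(N(X)\) is the set of vertices outside \(X\) adjacent to some vertex of \(X\); for an independent set \(Z\), \(\mathrm{surplus}(Z)=|N(Z)|-|Z|\). Reduction Rule 3 applies to \((G,k)\) when (i) the all-\(\frac12\) assignment is the unique optimum solution of \(LPVC(G)\), (ii) there is no independent set \(Z\) with \(\mathrm{surplus}(Z)=1\) and \(N(Z)\) non-independent, and (iii) there is an independent set \(Z\subseteq V(G)\) with \(\mathrm{surplus}(Z)=1\) such that \(N(Z)\) is an independent set in \(G\). It then removes \(Z\) and identifies the vertices of \(N(Z)\): \(G'\) is obtained from \(G\) by deleting \(Z\cup N(Z)\), adding a new vertex \(z\), and making \(z\) adjacent to every vertex of \(N(N(Z))\setminus Z\); and \(k'=k-|Z|\). *)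

(* Defs.v *)
From HB Require Import structures.
From mathcomp Require Import all_boot all_order all_algebra.
From mathcomp Require Import classical_sets reals.
Set Implicit Arguments. Unset Strict Implicit. Unset Printing Implicit Defensive.
Import Order.TTheory GRing.Theory Num.Theory.

(* A finite simple undirected graph on vertex type T is a symmetric,
   irreflexive relation e : rel T (vertex set = all of T). *)
Definition simple_graph (T : finType) (e : rel T) : Prop :=
  symmetric e /\ irreflexive e.

Section Graphs.
Variables (T : finType) (e : rel T).

Definition independent (X : {set T}) : bool :=
  [forall u in X, forall v in X, ~~ e u v].

Definition nbhd (X : {set T}) : {set T} :=
  [set v | (v \notin X) && [exists u in X, e u v]].

Definition surplus (Z : {set T}) : int := (#|nbhd Z|%:Z - #|Z|%:Z)%R.

Definition is_edge (A : {set T}) : bool :=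
  [exists u, exists v, e u v && (A == [set u; v])].
Definition matching (M : {set {set T}}) : bool :=
  [forall A in M, is_edge A] && finset.trivIset M.

Definition MM : nat := \max_(M : {set {set T}} | matching M) #|M|.

Local Open Scope ring_scope.
Variable R : realType.

Definition lpvc_feasible (x : T -> R) : Prop :=
  (forall u v, e u v -> 1 <= x u + x v) /\ (forall v, 0 <= x v <= 1).

Definition lp_obj (x : T -> R) : R := \sum_(v : T) x v.

Definition LP : R := inf [set lp_obj x | x in lpvc_feasible].

Definition lpvc_optimal (x : T -> R) : Prop :=
  lpvc_feasible x /\ lp_obj x = LP.

Definition half_unique_opt : Prop :=
  lpvc_optimal (fun _ => 2^-1) /\
  forall x, lpvc_optimal x -> forall v, x v = 2^-1.
End Graphs.

(* Graph G' of Reduction Rule 3: vertices are those of V(G) \ (Z ∪ N(Z)) (as a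
   subtype) plus a fresh vertex z (= None); z is adjacent to exactly the vertices
   of N(N(Z)) \ Z. *)
Section RR3.
Variables (T : finType) (e : rel T) (Z : {set T}).

Definition rr3_keep : {set T} := ~: (Z :|: nbhd e Z).
Definition rr3_vertex : finType := option {x : T | x \in rr3_keep}.

Definition rr3_edge : rel rr3_vertex := fun a b =>
  match a, b with
  | Some a', Some b' => e (val a') (val b')
  | None, Some b' => val b' \in nbhd e (nbhd e Z) :\: Z
  | Some a', None => val a' \in nbhd e (nbhd e Z) :\: Z
  | None, None => false
  end.
End RR3.
Arguments rr3_vertex [T] e Z.
Arguments rr3_edge [T] e Z _ _.

(* Main.v *)
Require Import Defs.
From HB Require Import structures.
From mathcomp Require Import all_boot all_order all_algebra.
From mathcomp Require Import classical_sets reals.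
From mathcomp Require Import zify ring lra.
Set Implicit Arguments. Unset Strict Implicit. Unset Printing Implicit Defensive.
Import Order.TTheory GRing.Theory Num.Theory.
Local Open Scope ring_scope.
Section Hall.
Local Open Scope nat_scope.
Definition NB (T:finType) (r: rel T) (B Y : {set T}) := [set b in B | [exists a in Y, r a b]].

Lemma NB_sub (T:finType) (r: rel T) (B Y : {set T}) : NB r B Y \subset B.
Proof. by apply/fintype.subsetP => b; rewrite inE => /andP[]. Qed.

Lemma hall (T : finType) (r : rel T) n : forall A B : {set T}, #|A| <= n ->
  (forall Y : {set T}, Y \subset A -> #|Y| <= #|NB r B Y|) ->
  exists f : T -> T, {in A &, injective f} /\
    (forall a, a \in A -> (f a \in B) && r a (f a)).
Proof.
elim: n => [|n IH] A B hA hH.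
  exists id; split=> [x y hx|x hx]; by move: hA; rewrite leqn0 cards_eq0 => /eqP HA; rewrite HA inE in hx.
case: (boolP [exists Y : {set T}, [&& Y \subset A, Y != finset.set0, Y != A & #|NB r B Y| <= #|Y|]]).
  case/existsP=> Y /and4P[sYA nY0 nYA tY].
  have pYA : Y \proper A by rewrite finset.properEneq nYA.
  have cY := proper_card pYA.
  have [f1 [i1 p1]] : exists f : T -> T, {in Y &, injective f} /\
      (forall a, a \in Y -> (f a \in B) && r a (f a)).
    apply: IH; first by lia.
    by move=> W sW; apply: hH; apply: fintype.subset_trans sW sYA.
  set A' := A :\: Y. set B' := B :\: NB r B Y.
  have cA' : #|A'| <= n.
    rewrite /A' cardsD (finset.setIidPr sYA).
    have : 0 < #|Y| by rewrite card_gt0.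
    lia.
  have [f2 [i2 p2]] : exists f : T -> T, {in A' &, injective f} /\
      (forall a, a \in A' -> (f a \in B') && r a (f a)).
    apply: IH => // W sW.
    have sWA : W \subset A by apply: fintype.subset_trans sW (finset.subsetDl _ _).
    have dWY : [disjoint W & Y].
      rewrite -setI_eq0; apply/eqP/setP => x; rewrite !inE.
      apply/negbTE/negP => /andP[xW xY].
      by have := fintype.subsetP sW x xW; rewrite inE xY.
    have h1 : #|W :|: Y| <= #|NB r B (W :|: Y)| by apply: hH; rewrite finset.subUset sWA sYA.
    have eWY : #|W :|: Y| = #|W| + #|Y|.
      have e0 : W :&: Y = finset.set0 by apply/eqP; rewrite setI_eq0.
      by rewrite cardsU e0 cards0 subn0.
    have sN : NB r B (W :|: Y) \subset NB r B' W :|: NB r B Y.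
      apply/fintype.subsetP => b; rewrite !inE => /andP[bB /existsP[a /andP[]]].
      rewrite inE => /orP[aW|aY] rab.
        case bY: [exists a0 in Y, r a0 b]; first by rewrite bB.
        rewrite bB orbF; apply/existsP; exists a; by rewrite aW.
      by rewrite bB /=; apply/orP; right; apply/existsP; exists a; rewrite aY.
    have := subset_leq_card sN; rewrite cardsU.
    lia.
  have q1 : forall a, a \in Y -> f1 a \in NB r B Y.
    move=> a aY; case/andP: (p1 a aY) => fB ra.
    rewrite inE fB /=; apply/existsP; exists a; by rewrite aY.
  have q2 : forall a, a \in A -> a \notin Y -> f2 a \notin NB r B Y.
    move=> a aA aY; have : a \in A' by rewrite inE aA aY.
    by move/p2 => /andP[]; rewrite inE => /andP[].
  exists (fun a => if a \in Y then f1 a else f2 a); split.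
    move=> x y xA yA /=.
    case xY: (x \in Y); case yY: (y \in Y).
    - by apply: i1.
    - by move=> hxy; have := q2 y yA (negbT yY); rewrite -hxy q1.
    - by move=> hxy; have := q2 x xA (negbT xY); rewrite hxy q1.
    - by apply: i2; rewrite inE ?xA ?yA ?xY ?yY.
  move=> a aA; case aY: (a \in Y); first exact: p1.
  have : a \in A' by rewrite inE aA aY.
  by move/p2; rewrite inE => /andP[/andP[_ ->] ->].
move=> hT.
have hS : forall Y : {set T}, Y \subset A -> Y != finset.set0 -> Y != A -> #|Y| < #|NB r B Y|.
  move=> Y sYA nY0 nYA; rewrite ltnNge; apply/negP => tY.
  by case/negP: hT; apply/existsP; exists Y; rewrite sYA nY0 nYA tY.
case: (finset.set_0Vmem A) => [A0|[a aA]].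
  by exists id; split=> [x y|x]; rewrite A0 inE.
have : #|[set a]| <= #|NB r B [set a]| by apply: hH; rewrite finset.sub1set.
rewrite cards1 card_gt0 => /set0Pn [b]; rewrite inE => /andP[bB /existsP[a' /andP[]]].
rewrite inE => /eqP -> rab.
set A' := A :\ a. set B' := B :\ b.
have [f2 [i2 p2]] : exists f : T -> T, {in A' &, injective f} /\
    (forall x, x \in A' -> (f x \in B') && r x (f x)).
  apply: IH.
    by rewrite /A'; move: hA; rewrite (cardsD1 a A) aA; lia.
  move=> W sW.
  have sWA : W \subset A by apply: fintype.subset_trans sW (finset.subsetDl _ _).
  case: (finset.set_0Vmem W) => [->|[w wW]]; first by rewrite cards0.
  have aW : a \notin W by apply/negP => /(fintype.subsetP sW); rewrite !inE eqxx.
  have nWA : W != A by apply/negP => /eqP eWA; move: aW; rewrite eWA aA.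
  have nW0 : W != finset.set0 by apply/set0Pn; exists w.
  have := hS W sWA nW0 nWA.
  have sN : NB r B W :\ b \subset NB r B' W.
    apply/fintype.subsetP => c; rewrite !inE => /andP[cb /andP[cB ->]].
    by rewrite cb cB.
  have := subset_leq_card sN.
  rewrite [#|NB r B W|](cardsD1 b (NB r B W)).
  case: (b \in NB r B W); lia.
exists (fun x => if x == a then b else f2 x); split.
  move=> x y xA yA /=.
  case: eqP => [xa|/eqP xa]; case: eqP => [ya|/eqP ya].
  - by rewrite xa ya.
  - have : y \in A' by rewrite !inE ya yA.
    by move/p2; rewrite !inE => /andP[/andP[nb _] _] hb; rewrite hb eqxx in nb.
  - have : x \in A' by rewrite !inE xa xA.
    by move/p2; rewrite !inE => /andP[/andP[nb _] _] hb; rewrite -hb eqxx in nb.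
  - by apply: i2; rewrite !inE ?xa ?ya ?xA ?yA.
move=> x xA; case: eqP => [->|/eqP xa]; first by rewrite bB rab.
have : x \in A' by rewrite !inE xa xA.
by move/p2; rewrite inE => /andP[/andP[_ ->] ->].
Qed.

End Hall.

Section LPfacts.
Variables (R : realType) (T : finType) (e : rel T).

Lemma lp_obj_ge0 (x : T -> R) : lpvc_feasible e x -> 0 <= lp_obj x.
Proof. by case=> _ hb; apply: sumr_ge0 => v _; case/andP: (hb v). Qed.

Lemma LP_le (x : T -> R) : lpvc_feasible e x -> LP e R <= lp_obj x.
Proof.
move=> hx; apply: ge_inf; last by exists x.
by exists 0 => y [z hz <-]; apply: lp_obj_ge0.
Qed.

Lemma LP_ge (c : R) : (forall x, lpvc_feasible e x -> c <= lp_obj x) -> c <= LP e R.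
Proof.
move=> H; apply: lb_le_inf; last by move=> y [z hz <-]; apply: H.
exists (lp_obj (fun _ : T => (1:R))), (fun _ => 1) => //; split=> [u v _|v]; last by rewrite ler01 lexx.
by rewrite lerDl ler01.
Qed.

Lemma sum_ind (A : {set T}) : \sum_(v : T) ((v \in A)%:R : R) = #|A|%:R.
Proof.
rewrite (eq_bigr (fun v => if v \in A then 1 else 0)); last by move=> v _; case: (v \in A).
by rewrite -big_mkcond /= sumr_const.
Qed.
End LPfacts.

Lemma nbhdP (T : finType) (e : rel T) (Y : {set T}) v :
  reflect (v \notin Y /\ exists2 u, u \in Y & e u v) (v \in nbhd e Y).
Proof.
rewrite inE; apply: (iffP andP) => [[h /existsP[u /andP[hu huv]]]|[h [u hu huv]]].
  by split=> //; exists u.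
by split=> //; apply/existsP; exists u; rewrite hu.
Qed.

Lemma indepP (T : finType) (e : rel T) (Y : {set T}) :
  independent e Y -> forall u v, u \in Y -> v \in Y -> e u v = false.
Proof. by move=> /forallP H u v hu hv; have /implyP/(_ hu)/forallP/(_ v)/implyP/(_ hv)/negbTE := H u. Qed.

Lemma surplus_pos (R : realType) (T : finType) (e : rel T) :
  simple_graph e -> half_unique_opt e R ->
  forall Y : {set T}, independent e Y -> Y != finset.set0 -> (#|Y| < #|nbhd e Y|)%N.
Proof.
move=> [esym _] [[hfeas hopt] huniq] Y hY nY0.
rewrite ltnNge; apply/negP => hle.
pose x (v : T) : R := 2^-1 + (v \in nbhd e Y)%:R * 2^-1 - (v \in Y)%:R * 2^-1.
have xY : forall v, v \in Y -> x v = 0.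
  move=> v hv; have : v \notin nbhd e Y by apply/negP => /nbhdP [/negP].
  rewrite /x hv => /negbTE ->; rewrite /=; lra.
have xN : forall v, v \in nbhd e Y -> x v = 1.
  move=> v hv; have := hv => /nbhdP [/negbTE hv' _]; rewrite /x hv hv' /=; lra.
have xO : forall v, v \notin Y -> v \notin nbhd e Y -> x v = 2^-1.
  by move=> v /negbTE h1 /negbTE h2; rewrite /x h1 h2 /=; lra.
have xfeas : lpvc_feasible e x.
  split.
    move=> u v huv.
    case uY: (u \in Y).
      have vN : v \in nbhd e Y.
        apply/nbhdP; split; last by exists u.
        by apply/negP => vY; rewrite (indepP hY uY vY) in huv.
      rewrite (xY u) // (xN v) //; lra.
    case vY: (v \in Y).
      have uN : u \in nbhd e Y.
        apply/nbhdP; split; first by rewrite uY.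
        by exists v => //; rewrite esym.
      rewrite (xY v) // (xN u) //; lra.
    have hu : 2^-1 <= x u.
      case uN: (u \in nbhd e Y); first by rewrite xN //; lra.
      by rewrite xO ?uY ?uN.
    have hv : 2^-1 <= x v.
      case vN: (v \in nbhd e Y); first by rewrite xN //; lra.
      by rewrite xO ?vY ?vN.
    lra.
  move=> v; case vY: (v \in Y); first by rewrite xY // lexx ler01.
  case vN: (v \in nbhd e Y); first by rewrite xN // ler01 lexx.
  rewrite xO ?vY ?vN //; apply/andP; split; lra.
have objx : lp_obj x = #|T|%:R * 2^-1 + #|nbhd e Y|%:R * 2^-1 - #|Y|%:R * 2^-1.
  rewrite /lp_obj /x !big_split /= sumrN -!mulr_suml !sum_ind sumr_const.
  by rewrite -[_ *+ #|T|]mulr_natl.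
have objh : lp_obj (fun _ : T => (2^-1 : R)) = #|T|%:R * 2^-1.
  by rewrite /lp_obj sumr_const mulr_natl.
have hle' : (#|nbhd e Y|%:R : R) <= #|Y|%:R by rewrite ler_nat.
have opt : lpvc_optimal e x.
  split=> //; apply/eqP; rewrite eq_le LP_le // andbT -hopt objx objh.
  have : (0 : R) < 2^-1 by rewrite invr_gt0 ltr0n.
  nra.
case/set0Pn: nY0 => y hy.
have := huniq x opt y; rewrite xY //.
move/eqP; rewrite eq_sym invr_eq0 pnatr_eq0 //.
Qed.

Lemma sumopt (R : nmodType) (S : finType) (F : option S -> R) :
  (\sum_(o : option S) F o = F None + \sum_(s : S) F (Some s))%R.
Proof.
rewrite (bigD1 None) //=; congr (_ + _)%R.
case: (pickP S) => [s0 _|H].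
  rewrite (reindex Some) /=; first by apply: eq_bigl => s.
  by exists (fun o => odflt s0 o) => [s|[s|]] //=.
rewrite !big_pred0 //.
by case=> [s|] //=; have := H s.
Qed.

Lemma keepE (T : finType) (e : rel T) (Z : {set T}) v :
  (v \in rr3_keep e Z) = (v \notin Z) && (v \notin nbhd e Z).
Proof. by rewrite !inE negb_or. Qed.

Lemma LP_rr3 (R : realType) (T : finType) (e : rel T) (Z : {set T}) :
  simple_graph e -> independent e Z -> independent e (nbhd e Z) ->
  #|nbhd e Z| = (#|Z| + 1)%N ->
  LP e R - #|Z|%:R <= LP (rr3_edge e Z) R.
Proof.
move=> [esym _] hZ hNZ hcard.
apply: LP_ge => x' [hx'e hx'b].
pose x (v : T) : R := if v \in Z then 1 - x' None else
  match (insub v : option {v : T | v \in rr3_keep e Z}) with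
  | Some s => x' (Some s) | None => x' None end.
have xZ : forall v, v \in Z -> x v = 1 - x' None by move=> v hv; rewrite /x hv.
have xN : forall v, v \in nbhd e Z -> x v = x' None.
  move=> v hv; have := hv => /nbhdP[/negbTE vZ _].
  by rewrite /x vZ insubF // keepE hv andbF.
have xK : forall v (h : v \in rr3_keep e Z), x v = x' (Some (exist _ v h)).
  move=> v h; have := h; rewrite keepE => /andP[/negbTE vZ _].
  by rewrite /x vZ insubT.
have NnZ : forall v, v \in nbhd e Z -> v \notin Z by move=> v /nbhdP[].
have xfeas : lpvc_feasible e x.
  split.
    move=> u v huv.
    case uZ: (u \in Z).
      have vN : v \in nbhd e Z.
        apply/nbhdP; split; last by exists u.
        by apply/negP => vZ; rewrite (indepP hZ uZ vZ) in huv.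
      rewrite (xZ u) // (xN v) //; lra.
    case vZ: (v \in Z).
      have uN : u \in nbhd e Z.
        apply/nbhdP; split; first by rewrite uZ.
        by exists v => //; rewrite esym.
      rewrite (xZ v) // (xN u) //; lra.
    case uN: (u \in nbhd e Z); case vN: (v \in nbhd e Z).
    - by rewrite (indepP hNZ uN vN) in huv.
    - have hv : v \in rr3_keep e Z by rewrite keepE vZ vN.
      rewrite (xN u) // (xK v hv).
      apply: (hx'e None (Some (exist _ v hv))) => /=.
      move: vN; rewrite !inE vZ /= => -> /=; apply/existsP; exists u; by rewrite uN.
    - have hu : u \in rr3_keep e Z by rewrite keepE uZ uN.
      rewrite (xN v) // (xK u hu) addrC.
      apply: (hx'e None (Some (exist _ u hu))) => /=.
      move: uN; rewrite !inE uZ /= => -> /=; apply/existsP; exists v; by rewrite vN esym.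
    - have hu : u \in rr3_keep e Z by rewrite keepE uZ uN.
      have hv : v \in rr3_keep e Z by rewrite keepE vZ vN.
      rewrite (xK u hu) (xK v hv).
      exact: (hx'e (Some (exist _ u hu)) (Some (exist _ v hv))).
  move=> v; case vZ: (v \in Z).
    rewrite xZ //; case/andP: (hx'b None) => h1 h2; apply/andP; split; lra.
  case vN: (v \in nbhd e Z); first by rewrite xN.
  have hv : v \in rr3_keep e Z by rewrite keepE vZ vN.
  by rewrite (xK v hv).
have := LP_le xfeas.
suff -> : lp_obj x = #|Z|%:R + lp_obj x' by lra.
rewrite /lp_obj sumopt (bigID (fun v => v \in Z)) /=.
rewrite (eq_bigr (fun _ => 1 - x' None)); last by move=> v /xZ.
rewrite [X in _ + X = _](bigID (fun v => v \in nbhd e Z)) /=.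
rewrite [X in _ + (X + _) = _](eq_big (fun v => v \in nbhd e Z) (fun _ => x' None)); first last.
- by move=> v /andP[_ /xN].
- move=> v; case vN: (v \in nbhd e Z); last by rewrite andbF.
  by rewrite andbT NnZ.
rewrite [X in _ + (_ + X) = _](eq_bigl (fun v => v \in rr3_keep e Z)); last by move=> v; rewrite keepE.
rewrite [X in _ + (_ + X) = _]big_sub /=.
rewrite [X in _ + (_ + X) = _](eq_bigr (fun s => x' (Some s))); last by case=> v h _; rewrite (xK v h).
rewrite !sumr_const hcard.
set S := (\sum_i _). set a := x' None.
rewrite -[(1 - a) *+ _]mulr_natr -[a *+ _]mulr_natr natrD. ring.
Qed.

Section MMsec.
Local Open Scope nat_scope.

Lemma disjI (T : finType) (A B : {set T}) :
  (forall x, x \in A -> x \in B -> False) -> [disjoint A & B].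
Proof.
move=> H; rewrite -setI_eq0; apply/eqP/setP=> x; rewrite !inE.
by apply/negbTE/negP => /andP[/H h /h].
Qed.

Lemma MM_ge (T : finType) (e : rel T) (M : {set {set T}}) : matching e M -> #|M| <= MM e.
Proof. by move=> hM; apply: (@leq_bigmax_cond _ (fun M => matching e M)). Qed.

Lemma MM_ex (T : finType) (e : rel T) : exists2 M, matching e M & #|M| = MM e.
Proof.
have h0 : 0 < #|[pred M : {set {set T}} | matching e M]|.
  apply/card_gt0P; exists finset.set0; rewrite inE /matching.
  apply/andP; split; first by apply/forallP => A; rewrite inE.
  by apply/finset.trivIsetP => A B; rewrite inE.
have [M hM hmax] := eq_bigmax_cond (fun M : {set {set T}} => #|M|) h0.
by exists M; [move: hM; rewrite inE | rewrite /MM hmax].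
Qed.

Lemma is_edgeP (T : finType) (e : rel T) A :
  reflect (exists u v, e u v /\ A = [set u; v]) (is_edge e A).
Proof.
apply: (iffP existsP) => [[u /existsP[v /andP[h /eqP ->]]]|[u [v [h ->]]]].
  by exists u, v.
by exists u; apply/existsP; exists v; rewrite h eqxx.
Qed.

Lemma MM_rr3 (T : finType) (e : rel T) (Z : {set T}) :
  simple_graph e -> independent e Z -> independent e (nbhd e Z) ->
  #|nbhd e Z| = #|Z| + 1 ->
  (forall Y : {set T}, Y \subset Z -> Y != finset.set0 -> #|Y| < #|nbhd e Y|) ->
  MM (rr3_edge e Z) + #|Z| <= MM e.
Proof.
move=> [esym eirr] hZ hNZ hcard hS.
set V := rr3_vertex e Z. set e' := rr3_edge e Z.
have NnZ : forall v, v \in nbhd e Z -> v \notin Z by move=> v /nbhdP[].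
have [M' /andP[/forallP hM'e /finset.trivIsetP hM'd] cM'] := MM_ex e'.
have [y yN hy] : exists2 y, y \in nbhd e Z &
    forall A, A \in M' -> forall w, None \in A -> Some w \in A -> e y (val w).
  case: (boolP [exists A in M', None \in A]).
    case/existsP => A0 /andP[A0M NA0].
    have [w0 [hw0 eA0]] : exists w0, e' None (Some w0) /\ A0 = [set None; Some w0].
      have /is_edgeP[u [v [huv eA]]] := implyP (hM'e A0) A0M.
      move: NA0; rewrite eA !inE.
      case: u huv eA => [a|]; case: v => [b|] //= huv eA.
      - by move=> _; exists a; split => //; apply/setP => t; rewrite !inE orbC.
      - by move=> _; exists b.
    move: (hw0) => /=; rewrite finset.in_setD => /andP[_ /nbhdP[_ [y yN hyw]]].
    exists y => // A AM w NA SA.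
    have eAA : A = A0.
      apply/eqP; apply/negP => /negP nAA.
      by have := hM'd A A0 AM A0M nAA => /disjointFr /(_ NA); rewrite NA0.
    by move: SA; rewrite eAA eA0 !inE => /orP[//|/eqP [->]].
  move=> hno.
  have : 0 < #|nbhd e Z| by rewrite hcard addn1.
  rewrite card_gt0 => /set0Pn[y yN]; exists y => // A AM w NA.
  by case/negP: hno; apply/existsP; exists A; rewrite AM.
have nbsub : forall Y : {set T}, Y \subset Z -> nbhd e Y \subset nbhd e Z.
  move=> Y sY; apply/fintype.subsetP => b /nbhdP[_ [u uY hub]].
  have uZ := fintype.subsetP sY u uY.
  apply/nbhdP; split; last by exists u.
  by apply/negP => bZ; rewrite (indepP hZ uZ bZ) in hub.
have [f [finj fP]] : exists f : T -> T, {in Z &, injective f} /\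
    (forall a, a \in Z -> (f a \in nbhd e Z :\ y) && e a (f a)).
  apply: (@hall _ e #|Z|) => // Y sY.
  case: (finset.set_0Vmem Y) => [->|[w wY]]; first by rewrite cards0.
  have nY0 : Y != finset.set0 by apply/set0Pn; exists w.
  have h1 := hS Y sY nY0.
  have sN : nbhd e Y :\ y \subset NB e (nbhd e Z :\ y) Y.
    apply/fintype.subsetP => b; rewrite !inE => /andP[bny /andP[bY /existsP[u /andP[uY hub]]]].
    rewrite bny /=.
    have bN : b \in nbhd e Z by apply: (fintype.subsetP (nbsub Y sY)); rewrite inE bY /=; apply/existsP; exists u; rewrite uY.
    by move: bN; rewrite inE => -> /=; apply/existsP; exists u; rewrite uY.
  have := subset_leq_card sN.
  rewrite [#|nbhd e Y|](cardsD1 y) in h1.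
  move: h1; case: (y \in nbhd e Y); lia.
have fN : forall a, a \in Z -> f a \in nbhd e Z.
  by move=> a /fP /andP[]; rewrite finset.in_setD1 => /andP[].
have fy : forall a, a \in Z -> f a != y.
  by move=> a /fP /andP[]; rewrite finset.in_setD1 => /andP[].
have fZ : forall a, a \in Z -> f a \notin Z by move=> a /fN /NnZ.
have fe : forall a, a \in Z -> e a (f a) by move=> a /fP /andP[].
pose phi (o : V) : T := if o is Some s then val s else y.
have keepN : forall s : {x : T | x \in rr3_keep e Z}, (val s \notin Z) && (val s \notin nbhd e Z).
  by move=> s; have := valP s; rewrite keepE.
have phiZ : forall o, phi o \notin Z.
  by case=> [s|] /=; [case/andP: (keepN s) | apply: NnZ].
have phiN : forall o, phi o \in nbhd e Z -> phi o = y.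
  by case=> [s|] //= hs; case/andP: (keepN s); rewrite hs.
have phi_inj : injective phi.
  case=> [s|] [t|] //=.
  - by move/val_inj => ->.
  - by move=> hs; have := keepN s; rewrite /= hs yN andbF.
  - by move=> hs; have := keepN t; rewrite /= -hs yN andbF.
set M1 := [set phi @: A | A : {set V} in M'] : {set {set T}}.
set M2 := [set [set a; f a] | a in Z] : {set {set T}}.
have cM1 : #|M1| = #|M'| by rewrite card_imset //; apply: imset_inj.
have cM2 : #|M2| = #|Z|.
  rewrite card_in_imset // => a b aZ bZ /= hab.
  have : a \in [set b; f b] by rewrite -hab !inE eqxx.
  rewrite !inE => /orP[/eqP //|/eqP ha].
  by have := fZ b bZ; rewrite -ha aZ.
have dM : [disjoint M1 & M2].
  apply: disjI => C /imsetP[A _ ->] /imsetP[a aZ ha].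
  have : a \in phi @: A by rewrite ha !inE eqxx.
  by case/imsetP => o _ hao; have := phiZ o; rewrite -hao aZ.
have hM : matching e (M1 :|: M2).
  apply/andP; split.
    apply/forallP => C; apply/implyP; rewrite finset.in_setU => /orP[/imsetP[A AM ->]|/imsetP[a aZ ->]].
      have /is_edgeP[u [v [huv eA]]] := implyP (hM'e A) AM.
      apply/is_edgeP; exists (phi u), (phi v); split; last first.
        by rewrite eA imsetU1 imset_set1.
      have uA : u \in A by rewrite eA !inE eqxx.
      have vA : v \in A by rewrite eA !inE eqxx orbT.
      case: u v huv uA vA {eA} => [a|] [b|] //= huv uA vA.
      - by rewrite esym; apply: (hy A AM a).
      - exact: (hy A AM b).
    by apply/is_edgeP; exists a, (f a); split => //; apply: fe.
  apply/finset.trivIsetP => C D; rewrite !finset.in_setU.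
  move=> /orP[/imsetP[A AM ->]|/imsetP[a aZ ->]] /orP[/imsetP[B BM ->]|/imsetP[b bZ ->]] nCD; apply: disjI => t.
  - move=> /imsetP[o oA ->] /imsetP[o' oB] /phi_inj eoo.
    have nAB : A != B by apply/negP => /eqP eAB; rewrite eAB eqxx in nCD.
    by have := hM'd A B AM BM nAB => /disjointFr /(_ oA); rewrite eoo oB.
  - move=> /imsetP[o _ ->]; rewrite !inE => /orP[/eqP ha|/eqP hb].
      by have := phiZ o; rewrite ha bZ.
    have := fy b bZ; have := fN b bZ; rewrite -hb => /phiN -> ; by rewrite eqxx.
  - move=> ht /imsetP[o _ eto]; move: ht; rewrite eto !inE => /orP[/eqP ha|/eqP hb].
      by have := phiZ o; rewrite ha aZ.
    have := fy a aZ; have := fN a aZ; rewrite -hb => /phiN -> ; by rewrite eqxx.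
  - have nab : a != b by apply/negP => /eqP eab; rewrite eab eqxx in nCD.
    rewrite !inE => /orP[/eqP ->|/eqP ->] /orP[/eqP h|/eqP h].
    + by rewrite h eqxx in nab.
    + by have := fZ b bZ; rewrite -h aZ.
    + by have := fZ a aZ; rewrite h bZ.
    + by have := finj a b aZ bZ h => eab; rewrite eab eqxx in nab.
have := MM_ge hM; rewrite cardsU.
have -> : M1 :&: M2 = finset.set0 by apply/eqP; rewrite setI_eq0.
rewrite cards0 subn0 cM1 cM2 cM'.
done.
Qed.
End MMsec.

Theorem lemma9 (R : realType) (T : finType) (e : rel T) (k : nat) (Z : {set T}) :
  simple_graph e ->
  (* (i) all-1/2 is the unique optimum of LPVC(G) *)
  half_unique_opt e R ->
  (* (ii) no independent set with surplus 1 and non-independent neighbourhood *)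
  (forall Y : {set T}, independent e Y -> surplus e Y = 1 ->
     independent e (nbhd e Y)) ->
  (* (iii) Z is independent, surplus 1, N(Z) independent *)
  independent e Z -> surplus e Z = 1 -> independent e (nbhd e Z) ->
  let e' := rr3_edge e Z in
  let k' : R := k%:R - #|Z|%:R in
  k' + (MM e')%:R - 2 * LP e' R <= k%:R + (MM e)%:R - 2 * LP e R.
Proof.
move=> hsim hhalf _ hZ hsur hNZ /=.
have hcard : #|nbhd e Z| = (#|Z| + 1)%N.
  move: hsur; rewrite /surplus; lia.
have hS : forall Y : {set T}, Y \subset Z -> Y != finset.set0 -> (#|Y| < #|nbhd e Y|)%N.
  move=> Y sY nY; apply: (surplus_pos hsim hhalf) => //.
  apply/forallP => u; apply/implyP => uY; apply/forallP => v; apply/implyP => vY.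
  by rewrite (indepP hZ (fintype.subsetP sY u uY) (fintype.subsetP sY v vY)).
have hMM := MM_rr3 hsim hZ hNZ hcard hS.
have hLP := LP_rr3 R hsim hZ hNZ hcard.
have hMMR : (MM (rr3_edge e Z))%:R + (#|Z|%:R : R) <= (MM e)%:R by rewrite -natrD ler_nat.
lra.
Qed.
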